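(* Let $\mathbf X$ be a design, $\lambda>0$, and $\boldsymbol\beta\in\mathbb R^p$ with fixed support $\mathcal A$, $|\mathcal A|=k$. Let $\mathcal Z_{\mathcal A}^{\pm}\subset\mathcal Z_{\mathcal A}$ be a set of $2^{k-1}$ sign vectors containing exactly one vector from each pair $\{\tilde{\boldsymbol z},-\tilde{\boldsymbol z}\}$ in $\mathcal Z_{\mathcal A}$. Then \[ \phi^{\pm}_\lambda(\mathbf X\mid\boldsymbol\beta)=2^{-(k-1)}\sum_{\tilde{\boldsymbol z}\in\mathcal Z_{\mathcal A}^{\pm}}\phi_\lambda(\mathbf X\mid\tilde{\mathbf Z}\boldsymbol\beta). \]
   Context: A design is an $n\times p$ matrix $\mathbf X$ with entries in $\{-1,+1\}$. Let $\mathbf P_1=n^{-1}\mathbf 1\mathbf 1^T$, $\mathbf V$ the diagonal matrix of the diagonal entries of $n^{-1}\mathbf X^T(\mathbf I-\mathbf P_1)\mathbf X$, $\mathbf F=(\mathbf I-\mathbf P_1)\mathbf X\mathbf V^{-1/2}$, $\mathbf C=n^{-1}\mathbf F^T\mathbf F$. For $\boldsymbol\beta$: support $\mathcal A=\{j:\beta_j\ne0\}$, complement $\mathcal I$, $\boldsymbol z=\mathrm{sign}(\boldsymbol\beta)$, $\mathbf Z_{\mathcal A}=\mathrm{Diag}(\boldsymbol z_{\mathcal A})$; subscripts denote subvectors/submatrices ($\mathbf F_{\mathcal T}$ columns, $\mathbf M_{\mathcal U\mathcal T}$ rows $\mathcal U$ and columns $\mathcal T$, $\mathbf M_{\mathcal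 T}=\mathbf M_{\mathcal T\mathcal T}$). Assume $\mathbf C_{\mathcal A}$ invertible and $\mathbf V_{\mathcal A}$ has positive diagonal. With $\mathbf P_{\mathcal A}=\mathbf F_{\mathcal A}(\mathbf F_{\mathcal A}^T\mathbf F_{\mathcal A})^{-1}\mathbf F_{\mathcal A}^T$, $\lambda_n=\lambda\sqrt n$, $\boldsymbol e\sim N(\mathbf 0,\mathbf I_n)$, $\boldsymbol u=-n^{-1/2}\mathbf Z_{\mathcal A}\mathbf C_{\mathcal A}^{-1}\mathbf F_{\mathcal A}^T\boldsymbol e+\lambda_n\mathbf Z_{\mathcal A}\mathbf C_{\mathcal A}^{-1}\boldsymbol z_{\mathcal A}$, $\boldsymbol v=n^{-1/2}\mathbf F_{\mathcal I}^T(\mathbf I-\mathbf P_{\mathcal A})\boldsymbol e+\lambda_n\mathbf C_{\mathcal I\mathcal A}\mathbf C_{\mathcal A}^{-1}\boldsymbol z_{\mathcal A}$, define $S_\lambda=\{\boldsymbol u<\sqrt n\mathbf Z_{\mathcal A}\mathbf V_{\mathcal A}^{1/2}\boldsymbol\beta_{\mathcal A}\}$, $I_\lambda=\{|\boldsymbol v|\le\lambda_n\mathbf 1\}$ (componentwise) and $\phi_\lambda(\mathbf X\mid\boldsymbol\beta)=P(S_\lambda\cap I_\lambda)$. Let $\mathcal Z_{\mathcal A}$ be the set of the $2^k$ vectors $\tilde{\boldsymbol z}\in\{-1,0,1\}^p$ with $\tilde z_j=0$ for $j\in\mathcal I$ and $\tilde z_j\in\{-1,1\}$ for $j\in\mathcal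 A$; for such $\tilde{\boldsymbol z}$ let $\tilde{\mathbf Z}$ be the $p\times p$ diagonal matrix with entries $\tilde z_j$ for $j\in\mathcal A$ and $1$ for $j\in\mathcal I$. The sign-averaged criterion is $\phi^{\pm}_\lambda(\mathbf X\mid\boldsymbol\beta)=2^{-k}\sum_{\tilde{\boldsymbol z}\in\mathcal Z_{\mathcal A}}\phi_\lambda(\mathbf X\mid\tilde{\mathbf Z}\boldsymbol\beta)$. *)

(* Defs.v *)
From HB Require Import structures.
From mathcomp Require Import all_boot all_order all_algebra.
From mathcomp Require Import all_classical all_reals all_analysis.
Set Implicit Arguments. Unset Strict Implicit. Unset Printing Implicit Defensive.
Import Order.TTheory GRing.Theory Num.Theory.
Local Open Scope classical_set_scope.
Local Open Scope ring_scope.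

Section LassoCriterion.
Variable R : realType.
Variables n p : nat.
Implicit Types (X : 'M[R]_(n, p)) (b : 'cV[R]_p) (A : {set 'I_p}).

Definition is_design X : Prop := forall i j, X i j = 1 \/ X i j = -1.

Definition nR : R := n%:R.
Definition P1 : 'M[R]_n := nR^-1 *: const_mx 1.
Definition Vdiag X (j : 'I_p) : R := (nR^-1 *: (X^T *m (1%:M - P1) *m X)) j j.
Definition Fmat X : 'M[R]_(n, p) :=
  (1%:M - P1) *m X *m diag_mx (\row_j (Num.sqrt (Vdiag X j))^-1).
Definition Cmat X : 'M[R]_p := nR^-1 *: ((Fmat X)^T *m Fmat X).

Definition supp b : {set 'I_p} := [set j | b j 0 != 0].

Definition idx (A : {set 'I_p}) (i : 'I_#|A|) : 'I_p := enum_val i.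

Definition F_sub X A : 'M[R]_(n, #|A|) := colsub (@idx A) (Fmat X).
Definition C_sub X A : 'M[R]_#|A| := mxsub (@idx A) (@idx A) (Cmat X).
Definition C_IA X A : 'M[R]_(#|~: A|, #|A|) := mxsub (@idx (~: A)) (@idx A) (Cmat X).
Definition P_sub X A : 'M[R]_n :=
  F_sub X A *m invmx ((F_sub X A)^T *m F_sub X A) *m (F_sub X A)^T.

Definition z_sub b : 'cV[R]_#|supp b| := \col_i Num.sg (b (@idx (supp b) i) 0).
Definition Z_sub b : 'M[R]_#|supp b| := diag_mx (z_sub b)^T.
Definition b_sub b : 'cV[R]_#|supp b| := \col_i b (@idx (supp b) i) 0.
Definition Vhalf_sub X A : 'M[R]_#|A| :=
  diag_mx (\row_i Num.sqrt (Vdiag X (@idx A i))).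

Definition u_vec X (lam : R) b (e : 'cV[R]_n) : 'cV[R]_#|supp b| :=
  - ((Num.sqrt nR)^-1 *:
       (Z_sub b *m invmx (C_sub X (supp b)) *m (F_sub X (supp b))^T *m e))
  + (lam * Num.sqrt nR) *: (Z_sub b *m invmx (C_sub X (supp b)) *m z_sub b).

Definition v_vec X (lam : R) b (e : 'cV[R]_n) : 'cV[R]_#|~: supp b| :=
  (Num.sqrt nR)^-1 *:
     ((F_sub X (~: supp b))^T *m (1%:M - P_sub X (supp b)) *m e)
  + (lam * Num.sqrt nR) *:
     (C_IA X (supp b) *m invmx (C_sub X (supp b)) *m z_sub b).

Definition S_event X (lam : R) b (e : 'cV[R]_n) : Prop :=
  forall i, u_vec X lam b e i 0 <
    Num.sqrt nR * (Z_sub b *m Vhalf_sub X (supp b) *m b_sub b) i 0.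
Definition I_event X (lam : R) b (e : 'cV[R]_n) : Prop :=
  forall i, `| v_vec X lam b e i 0 | <= lam * Num.sqrt nR.

(* e = (e_1, ..., e_n) ~ N(0, I_n): measurable components, each N(0,1),
   mutually independent (product rule for all families of Borel sets; taking
   B_i = setT gives the product rule for every subfamily). *)
Definition std_gaussian_vector (d : measure_display) (T : measurableType d)
    (P : probability T R) (e : 'I_n -> T -> R) : Prop :=
  [/\ (forall i, measurable_fun setT (e i)),
      (forall i (B : set R), measurable B ->
          P (e i @^-1` B) = normal_prob (0 : R) 1 B) &
      (forall B : 'I_n -> set R, (forall i, measurable (B i)) ->
          P [set w | forall i, B i (e i w)] = (\prod_i P (e i @^-1` B i))%E)].

Definition noise (T : Type) (e : 'I_n -> T -> R) (w : T) : 'cV[R]_n :=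
  \col_i e i w.

Definition phi (d : measure_display) (T : measurableType d)
    (P : probability T R) (e : 'I_n -> T -> R) X (lam : R) b : R :=
  fine (P [set w | S_event X lam b (noise e w) /\ I_event X lam b (noise e w)]).

Definition ZA_set A : set 'cV[R]_p :=
  [set z | forall j, (j \notin A -> z j 0 = 0) /\
                     (j \in A -> z j 0 = 1 \/ z j 0 = -1)].
Definition Ztil A (z : 'cV[R]_p) : 'M[R]_p :=
  diag_mx (\row_j (if j \in A then z j 0 else 1)).

Definition phi_pm (d : measure_display) (T : measurableType d)
    (P : probability T R) (e : 'I_n -> T -> R) X (lam : R) b : R :=
  (2 ^+ #|supp b|)^-1 *
    \sum_(z \in ZA_set (supp b)) phi P e X lam (Ztil (supp b) z *m b).

End LassoCriterion.

(* Main.v *)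
Require Import Defs.
From HB Require Import structures.
From mathcomp Require Import all_boot all_order all_algebra.
From mathcomp Require Import all_classical all_reals all_analysis.
From mathcomp Require Import measurable_realfun measurable_fun_approximation.
From mathcomp Require Import ring lra.
Import Order.TTheory GRing.Theory Num.Theory.
Local Open Scope classical_set_scope.
Local Open Scope ring_scope.
Set Implicit Arguments. Unset Strict Implicit. Unset Printing Implicit Defensive.

Definition cvn (R : realType) n := 'cV[R]_n.
HB.instance Definition _ (R : realType) n := Choice.on (cvn R n).
HB.instance Definition _ (R : realType) n := isPointed.Build (cvn R n) 0.

Section Sym.
Variables (R : realType) (n : nat).
Definition rects : set (set (cvn R n)) :=
  [set [set x : cvn R n | forall i, B i (x i 0)] | B in [set B : 'I_n -> set R | forall i, measurable (B i)]].
Local Notation Tp := (g_sigma_algebraType rects).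

Lemma meas_coord (i : 'I_n) : measurable_fun setT (fun x : Tp => x i 0).
Proof.
move=> _ B mB; rewrite setTI; apply: sub_sigma_algebra.
exists (fun j => if j == i then B else setT).
  by move=> j; case: ifP.
apply/seteqP; split => x /=.
  by move=> /(_ i); rewrite eqxx.
by move=> Bx j; case: ifP => // /eqP ->.
Qed.

Lemma meas_mx m (M : 'M[R]_(m, n)) (i : 'I_m) :
  measurable_fun setT (fun x : Tp => (M *m x) i 0).
Proof.
under eq_fun do rewrite mxE.
apply: measurable_sum => j.
apply: measurable_funM; first exact: measurable_cst.
exact: meas_coord.
Qed.

Lemma normal_sym (B : set R) : measurable B ->
  normal_prob 0 1 (-%R @^-1` B) = normal_prob 0 1 B.
Proof.
move=> mB; rewrite /normal_prob.
have mpdf : measurable_fun setT (fun x : R => (normal_pdf 0 1 x)%:E).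
  by apply/measurable_EFinP; exact: measurable_normal_pdf.
transitivity (\int[lebesgue_measure]_(x in (-%R : _ -> measurableTypeR R) @^-1` B)
     ((fun x => (normal_pdf 0 1 x)%:E) \o (-%R : _ -> measurableTypeR R)) x)%E.
  apply: eq_integral => x _ /=.
  by rewrite /normal_pdf oner_eq0 /normal_fun !subr0 sqrrN.
rewrite -ge0_integral_pushforward //=.
- apply: eq_measure_integral => A mA _.
  exact: (lebesgue_measureN mA).
- exact: measurable_funS mpdf.
- by move=> y _; rewrite lee_fin normal_pdf_ge0.
Qed.


Lemma sym_prob (d : measure_display) (T : measurableType d) (P : probability T R)
  (e : 'I_n -> T -> R) : std_gaussian_vector P e ->
  forall E : set Tp, measurable E ->
  P [set w | E (noise e w)] = P [set w | E (- noise e w)].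
Proof.
case=> me he hind E mE.
have mei : forall i (B : set R), measurable B -> measurable (e i @^-1` B).
  by move=> i B mB; rewrite -[X in measurable X]setTI; exact: me.
have mNB : forall B : set R, measurable B -> measurable (-%R @^-1` B).
  by move=> B mB; rewrite -[X in measurable X]setTI; exact: oppr_measurable.
have finI : finite_set [set: 'I_n] by exact: finite_finset.
pose f : T -> Tp := fun w => noise e w.
pose g : T -> Tp := fun w => - noise e w.
have mf : measurable_fun setT f.
  apply: (@measurability _ _ T Tp setT _ rects) => //.
  move=> _ [_ [B mB <-] <-]; rewrite setTI.
  have -> : f @^-1` [set x : cvn R n | forall i, B i (x i 0)] =
            \bigcap_(i in setT) (e i @^-1` B i).
    by apply/seteqP; split => w /=; rewrite /f /noise => H i; [move: (H i); rewrite mxE | rewrite mxE; exact: H].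
  by apply: fin_bigcap_measurable => // i _; exact: mei.
have mg : measurable_fun setT g.
  apply: (@measurability _ _ T Tp setT _ rects) => //.
  move=> _ [_ [B mB <-] <-]; rewrite setTI.
  have -> : g @^-1` [set x : cvn R n | forall i, B i (x i 0)] =
            \bigcap_(i in setT) (e i @^-1` (-%R @^-1` B i)).
    by apply/seteqP; split => w /=; rewrite /g /noise => H i; [move: (H i); rewrite !mxE | rewrite !mxE; exact: H].
  by apply: fin_bigcap_measurable => // i _; apply: mei; exact: mNB.
pose mu1 := measure_function_pushforward__canonical__measure_function_Measure P mf.
pose mu2 := measure_function_pushforward__canonical__measure_function_Measure P mg.
have := @measure_unique _ R Tp rects (fun _ => setT) erefl _ _ _ mu1 mu2.
rewrite /mu1 /mu2 /=; move=> H; apply: H => //.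
- move=> _ _ [B1 mB1 <-] [B2 mB2 <-].
  exists (fun i => B1 i `&` B2 i).
    by move=> i; apply: measurableI.
  by apply/seteqP; split => x /=; [move=> H; split => i; case: (H i) | case=> H1 H2 i; split].
- move=> _; exists (fun _ => setT) => //.
  by apply/seteqP; split.
- by rewrite bigcup_const.
- move=> _ [B mB <-]; rewrite /pushforward.
  have -> : f @^-1` [set x : cvn R n | forall i, B i (x i 0)] =
            [set w | forall i, B i (e i w)].
    by apply/seteqP; split => w /=; rewrite /f /noise => H i; [move: (H i); rewrite mxE | rewrite mxE; exact: H].
  have -> : g @^-1` [set x : cvn R n | forall i, B i (x i 0)] =
            [set w | forall i, (-%R @^-1` B i) (e i w)].
    by apply/seteqP; split => w /=; rewrite /g /noise => H i; [move: (H i); rewrite !mxE | rewrite !mxE; exact: H].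
  have mB' : forall i, measurable (-%R @^-1` B i) by move=> i; exact: mNB.
  apply: (etrans (hind B mB)); apply: (etrans _ (esym (hind _ mB'))).
  apply: eq_bigr => i _.
  by rewrite !he // ?normal_sym //; exact: mNB.
- move=> _; rewrite /pushforward preimage_setT probability_setT.
  exact: ltry.
Qed.
End Sym.

Section Alg.
Variables (R : realType) (n p : nat).
Implicit Types (X : 'M[R]_(n, p)) (c : 'cV[R]_p) (A : {set 'I_p}) (x : 'cV[R]_n).
Definition zg A c : 'cV[R]_#|A| := \col_i Num.sg (c (@idx p A i) 0).
Definition Zg A c : 'M[R]_#|A| := diag_mx (zg A c)^T.
Definition bg A c : 'cV[R]_#|A| := \col_i c (@idx p A i) 0.
Definition ug X (lam : R) A c x : 'cV[R]_#|A| :=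
  - ((Num.sqrt (nR R n))^-1 *:
       (Zg A c *m invmx (C_sub X A) *m (F_sub X A)^T *m x))
  + (lam * Num.sqrt (nR R n)) *: (Zg A c *m invmx (C_sub X A) *m zg A c).
Definition vg X (lam : R) A c x : 'cV[R]_#|~: A| :=
  (Num.sqrt (nR R n))^-1 *:
     ((F_sub X (~: A))^T *m (1%:M - P_sub X A) *m x)
  + (lam * Num.sqrt (nR R n)) *:
     (C_IA X A *m invmx (C_sub X A) *m zg A c).
Definition Sg X lam A c x : Prop :=
  forall i, ug X lam A c x i 0 <
    Num.sqrt (nR R n) * (Zg A c *m Vhalf_sub X A *m bg A c) i 0.
Definition Ig X lam A c x : Prop :=
  forall i, `| vg X lam A c x i 0 | <= lam * Num.sqrt (nR R n).

Lemma S_eq X lam c x : S_event X lam c x = Sg X lam (supp c) c x.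
Proof. by []. Qed.
Lemma I_eq X lam c x : I_event X lam c x = Ig X lam (supp c) c x.
Proof. by []. Qed.

Lemma zgN A c : zg A (- c) = - zg A c.
Proof. by apply/matrixP => i j; rewrite !mxE sgrN. Qed.
Lemma ZgN A c : Zg A (- c) = - Zg A c.
Proof. by apply/matrixP => i j; rewrite !mxE sgrN mulNrn. Qed.
Lemma bgN A c : bg A (- c) = - bg A c.
Proof. by apply/matrixP => i j; rewrite !mxE. Qed.

Lemma ugN X lam A c x : ug X lam A (- c) x = ug X lam A c (- x).
Proof.
rewrite /ug ZgN zgN !mulNmx !mulmxN. rewrite opprK. by [].
Qed.
Lemma vgN X lam A c x : vg X lam A (- c) x = - vg X lam A c (- x).
Proof.
by rewrite /vg zgN !mulmxN !scalerN opprD opprK.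
Qed.
Lemma SgN X lam A c x : Sg X lam A (- c) x <-> Sg X lam A c (- x).
Proof.
by rewrite /Sg ugN ZgN bgN !mulNmx mulmxN opprK.
Qed.
Lemma vgNi X lam A c x i : vg X lam A (- c) x i 0 = - vg X lam A c (- x) i 0.
Proof. by rewrite vgN mxE. Qed.
Lemma IgN X lam A c x : Ig X lam A (- c) x <-> Ig X lam A c (- x).
Proof.
rewrite /Ig; split => H i; move: (H i); by rewrite vgNi normrN.
Qed.
Lemma suppN c : supp (- c) = supp c.
Proof. by apply/setP => j; rewrite !inE mxE oppr_eq0. Qed.
End Alg.

Section Event.
Variables (R : realType) (n p : nat).
Local Notation Tp := (g_sigma_algebraType (@rects R n)).

Lemma meas_lt (f : Tp -> R) K : measurable_fun setT f -> measurable [set x | f x < K].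
Proof.
move=> mf; have := mf measurableT _ (measurable_itv `]-oo, K[); rewrite setTI.
congr measurable; apply/seteqP; split => x /=; by rewrite in_itv /=.
Qed.

Lemma meas_le (f : Tp -> R) K : measurable_fun setT f -> measurable [set x | `|f x| <= K].
Proof.
move=> mf; have mf' : measurable_fun setT (fun x => `|f x|).
  by apply: measurableT_comp => //; exact: normr_measurable.
have := mf' measurableT _ (measurable_itv `]-oo, K]); rewrite setTI.
congr measurable; apply/seteqP; split => x /=; by rewrite in_itv /=.
Qed.

Lemma meas_event (X : 'M[R]_(n, p)) lam A c :
  measurable [set x : Tp | Sg X lam A c x /\ Ig X lam A c x].
Proof.
have finI : forall m, finite_set [set: 'I_m] by move=> m; exact: finite_finset.
have -> : [set x : Tp | Sg X lam A c x /\ Ig X lam A c x] =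
   (\bigcap_(i in setT) [set x : Tp | ug X lam A c x i 0 <
        Num.sqrt (nR R n) * (Zg A c *m Vhalf_sub X A *m bg A c) i 0]) `&`
   (\bigcap_(i in setT) [set x : Tp | `| vg X lam A c x i 0 | <= lam * Num.sqrt (nR R n)]).
  by apply/seteqP; split => x /=; [case=> H1 H2; split => i _; [exact: H1|exact: H2] | case=> H1 H2; split => i; [exact: H1|exact: H2]].
apply: measurableI; apply: fin_bigcap_measurable => // i _.
- apply: meas_lt.
  have -> : (fun x => ug X lam A c x i 0) = (fun x : Tp =>
     ((- ((Num.sqrt (nR R n))^-1 *: (Zg A c *m invmx (C_sub X A) *m (F_sub X A)^T))) *m x) i 0
     + ((lam * Num.sqrt (nR R n)) *: (Zg A c *m invmx (C_sub X A) *m zg A c)) i 0).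
    by apply: funext => x; rewrite /ug mxE mulNmx -scalemxAl.
  by apply: measurable_funD; [exact: meas_mx | exact: measurable_cst].
- apply: meas_le.
  have -> : (fun x => vg X lam A c x i 0) = (fun x : Tp =>
     (((Num.sqrt (nR R n))^-1 *: ((F_sub X (~: A))^T *m (1%:M - P_sub X A))) *m x) i 0
     + ((lam * Num.sqrt (nR R n)) *: (C_IA X A *m invmx (C_sub X A) *m zg A c)) i 0).
    by apply: funext => x; rewrite /vg mxE -scalemxAl.
  by apply: measurable_funD; [exact: meas_mx | exact: measurable_cst].
Qed.

Lemma phiN (d : measure_display) (T : measurableType d) (P : probability T R)
  (e : 'I_n -> T -> R) (X : 'M[R]_(n, p)) lam c :
  std_gaussian_vector P e -> phi P e X lam (- c) = phi P e X lam c.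
Proof.
move=> He; rewrite /phi.
have -> : [set w | S_event X lam (- c) (noise e w) /\ I_event X lam (- c) (noise e w)]
  = [set w | (fun x : Tp => Sg X lam (supp c) c x /\ Ig X lam (supp c) c x) (- noise e w)].
  apply/seteqP; split => w /=; rewrite S_eq I_eq suppN SgN IgN; by [].
rewrite -(sym_prob He (meas_event X lam (supp c) c)).
by [].
Qed.
End Event.
Section Main.
Variables (R : realType) (p : nat).
Implicit Types (A : {set 'I_p}) (z : 'cV[R]_p).

Lemma ZAN A z : ZA_set A (- z) -> ZA_set A z.
Proof.
move=> H j; have [H1 H2] := H j; rewrite !mxE in H1 H2; split.
  by move=> /H1 /eqP; rewrite oppr_eq0 => /eqP.
move=> /H2 [h|h]; [right|left].
  by rewrite -[z j 0]opprK h.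
by rewrite -[z j 0]opprK h opprK.
Qed.

Lemma ZA_finite A : finite_set (@ZA_set R p A).
Proof.
pose h := fun f : {ffun 'I_p -> bool} =>
  (\col_j (if j \in A then (if f j then 1 else -1) else 0) : 'cV[R]_p).
apply: (@sub_finite_set _ _ (h @` setT)); last first.
  by apply: finite_image; exact: finite_finset.
move=> z Hz; exists [ffun j => z j 0 == 1] => //.
apply/matrixP => j k; rewrite (ord1 k) !mxE ffunE.
have [H1 H2] := Hz j.
case: ifP => jA.
  case: (H2 jA) => ->; first by rewrite eqxx.
  by case: ifP => // /eqP h1; lra.
by rewrite H1 // jA.
Qed.

Lemma ZtilN (b : 'cV[R]_p) z :
  Ztil (supp b) (- z) *m b = - (Ztil (supp b) z *m b).
Proof.
apply/matrixP => j k; rewrite /Ztil !mul_diag_mx !mxE.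
case: ifP => jA; first by rewrite mulNr.
have : b j 0 = 0.
  by move: jA; rewrite inE => /negbFE /eqP ->.
by rewrite (ord1 k) => ->; rewrite mulr0 oppr0.
Qed.

End Main.

Unset Implicit Arguments.
Set Strict Implicit.

Theorem corollary1 (R : realType) (n p : nat) (d : measure_display)
    (T : measurableType d) (P : probability T R) (e : 'I_n -> T -> R)
    (X : 'M[R]_(n, p)) (lam : R) (b : 'cV[R]_p) (Zpm : set 'cV[R]_p) :
  std_gaussian_vector P e ->
  is_design X ->
  0 < lam ->
  (0 < #|supp b|)%N ->
  C_sub X (supp b) \in unitmx ->
  (forall j, j \in supp b -> 0 < Vdiag X j) ->
  Zpm `<=` ZA_set (supp b) ->
  (forall z, ZA_set (supp b) z -> (Zpm z <-> ~ Zpm (- z))) ->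
  phi_pm P e X lam b =
    (2 ^+ (#|supp b|.-1))^-1 *
      \sum_(z \in Zpm) phi P e X lam (Ztil (supp b) z *m b).
Proof.
move=> He _ _ k0 _ _ hsub hiff.
rewrite /phi_pm.
set A := supp b.
set F := fun z => phi P e X lam (Ztil A z *m b).
have FN : forall z, F (- z) = F z.
  by move=> z; rewrite /F ZtilN phiN.
have ZAeq : ZA_set A = Zpm `|` [set z | Zpm (- z)].
  apply/seteqP; split => z.
    move=> hz; case: (pselect (Zpm z)) => h; [by left|right].
    case: (pselect (Zpm (- z))) => // h'.
    by exfalso; apply: h; apply/(hiff z hz).
  by case=> [/hsub //| /= /hsub /ZAN].
have finZA := @ZA_finite R p A.
have fin1 : finite_set Zpm by exact: sub_finite_set hsub finZA.
have fin2 : finite_set [set z | Zpm (- z)].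
  by apply: sub_finite_set finZA => z /= /hsub /ZAN.
rewrite ZAeq fsbigU //; last first.
  move=> z [h1 h2]; exfalso.
  by have /(hiff z (hsub _ h1)) := h1; apply.
have -> : [set z | Zpm (- z)] = (-%R) @` Zpm.
  apply/seteqP; split => z /=.
    by move=> h; exists (- z) => //; rewrite opprK.
  by case=> y hy <-; rewrite opprK.
rewrite fsbig_image; last by move=> x y _ _ /oppr_inj.
have E2 : \sum_(i \in Zpm) phi P e X lam (Ztil A (- i) *m b) =
          \sum_(i \in Zpm) phi P e X lam (Ztil A i *m b).
  by apply: eq_fsbigr => z _; exact: FN.
rewrite /= E2 /F.
move: (\sum_(i \in Zpm) phi P e X lam (Ztil A i *m b)) => S.
rewrite -(prednK k0) exprS /=.
move: (#|A|.-1) => m.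
have h2 : (2 : R) ^+ m != 0 by rewrite expf_neq0 // pnatr_eq0.
field.
exact: h2.
Qed.
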